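(* Let $K$ be a compact metric space, let $\mathcal U$ be an ultrafilter on a set $I$, and let $(M_i)_{i\in I}$ be a family of uniformly bounded pointed metric spaces. If there exists an algebra isomorphism between $(\mathrm{Lip}_0(M_i))_{\mathcal U}$ and $\mathrm{Lip}_0(K)$, then the metric ultraproduct $(M_i)_{\mathcal U}$ is biLipschitz equivalent to a subset of $K$.
   Context: For a pointed metric space $M$, $\mathrm{Lip}_0(M)$ is the Banach space of real Lipschitz functions vanishing at the base point, normed by the Lipschitz constant; for bounded $M$ it is an algebra under pointwise multiplication. $(\mathrm{Lip}_0(M_i))_{\mathcal U}$ denotes the Banach space ultraproduct (norm $\lim_{\mathcal U}\|f_i\|$) with coordinatewise multiplication; an algebra isomorphism is a bounded linear bijection with bounded inverse that preserves products. Metric ultraproduct: with distinguished points $0_i\in M_i$, $\ell_\infty(M_i)=\{(x_i)\in\prod_iM_i:\sup_id_i(x_i,0_i)<\infty\}$ with pseudometric $\lim_{\mathcal U,i}d_i(x_i,y_i)$; $(M_i)_{\mathcal U}$ is the metric quotient identifying points at distance $0$ (for uniformly bounded $M_i$ it does not depend on the distinguished points). *)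

(* Defs.v *)
From Stdlib Require List.
From mathcomp Require Import all_boot all_order all_algebra.
From mathcomp Require Import boolp classical_sets reals.
Set Implicit Arguments.
Unset Strict Implicit.
Unset Printing Implicit Defensive.
Import Order.TTheory GRing.Theory Num.Theory.
Local Open Scope ring_scope.
Local Open Scope classical_set_scope.

Section Defs.
Variable R : realType.

Definition is_metric (T : Type) (d : T -> T -> R) : Prop :=
  (forall x y, d x y = 0 <-> x = y) /\
  (forall x y, d x y = d y x) /\
  (forall x y z, d x z <= d x y + d y z).

Definition mopen (T : Type) (d : T -> T -> R) (A : set T) : Prop :=
  forall x, A x -> exists r : R, 0 < r /\ forall y, d x y < r -> A y.

Definition mcompact (T : Type) (d : T -> T -> R) : Prop :=
  forall (J : Type) (U : J -> set T),
    (forall j, mopen d (U j)) -> (forall x, exists j, U j x) ->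
    exists s : list J, forall x, exists j, List.In j s /\ U j x.

Definition lipschitz (T : Type) (d : T -> T -> R) (f : T -> R) : Prop :=
  exists L : R, forall x y, `|f x - f y| <= L * d x y.

Definition Lip0 (T : Type) (d : T -> T -> R) (p : T) (f : T -> R) : Prop :=
  f p = 0 /\ lipschitz d f.

(* Lipschitz constant (norm of Lip_0); sup of the empty set is 0 *)
Definition lipnorm (T : Type) (d : T -> T -> R) (f : T -> R) : R :=
  sup [set r | exists x y, x <> y /\ r = `|f x - f y| / d x y].

Definition is_ultrafilter (I : Type) (U : set (set I)) : Prop :=
  ~ U set0 /\ U setT /\
  (forall A B, U A -> A `<=` B -> U B) /\
  (forall A B, U A -> U B -> U (A `&` B)) /\
  (forall A, U A \/ U (~` A)).

Definition ulim (I : Type) (U : set (set I)) (a : I -> R) (L : R) : Prop :=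
  forall e : R, 0 < e -> U [set i | `|a i - L| < e].

(* representatives of elements of the ultraproduct (Lip_0(M_i))_U:
   families of Lip_0 functions with uniformly bounded norms *)
Definition in_Lip_ultraproduct (I : Type) (M : I -> Type)
    (d : forall i, M i -> M i -> R) (p : forall i, M i)
    (f : forall i, M i -> R) : Prop :=
  (forall i, Lip0 (d i) (p i) (f i)) /\
  exists B : R, forall i, lipnorm (d i) (f i) <= B.

(* An algebra isomorphism (Lip_0(M_i))_U -> Lip_0(K), given on representatives:
   T is linear and multiplicative (coordinatewise operations), onto Lip_0(K),
   and c * ||f||_U <= ||T f|| <= C * ||f||_U with ||f||_U = lim_U ||f_i||.
   (The two-sided bound makes T well defined and injective on the quotient
   by the null families, and gives boundedness of T and of its inverse.) *)
Definition lip_ultraproduct_algebra_iso (I : Type) (U : set (set I))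
    (M : I -> Type) (d : forall i, M i -> M i -> R) (p : forall i, M i)
    (K : Type) (dK : K -> K -> R) (k0 : K)
    (T : (forall i, M i -> R) -> (K -> R)) : Prop :=
  let UP := in_Lip_ultraproduct d p in
  (forall f, UP f -> Lip0 dK k0 (T f)) /\
  (forall f g, UP f -> UP g ->
      T (fun i x => f i x + g i x) = (fun k => T f k + T g k)) /\
  (forall (c : R) f, UP f -> T (fun i x => c * f i x) = (fun k => c * T f k)) /\
  (forall f g, UP f -> UP g ->
      T (fun i x => f i x * g i x) = (fun k => T f k * T g k)) /\
  (forall h, Lip0 dK k0 h -> exists f, UP f /\ T f = h) /\
  (exists c C : R, 0 < c /\ 0 < C /\
     forall f, UP f -> forall L, ulim U (fun i => lipnorm (d i) (f i)) L ->
       c * L <= lipnorm dK (T f) /\ lipnorm dK (T f) <= C * L).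

End Defs.

(* Main.v *)
Require Import Defs.
From mathcomp Require Import all_boot all_order all_algebra.
From mathcomp Require Import boolp classical_sets reals.
From mathcomp Require Import ring lra.
Import Order.TTheory GRing.Theory Num.Theory.
Local Open Scope ring_scope.
Local Open Scope classical_set_scope.
Set Implicit Arguments.
Unset Strict Implicit.
Unset Printing Implicit Defensive.
Section Aux.
Variable R : realType.

Section Metric.
Variables (T : Type) (d : T -> T -> R).
Hypothesis hd : is_metric d.

Lemma md0 x : d x x = 0.
Proof. by case: hd => h _; apply/(h x x). Qed.
Lemma mdC x y : d x y = d y x.
Proof. by case: hd => _ [h _]. Qed.
Lemma mdT x y z : d x z <= d x y + d y z.
Proof. by case: hd => _ [_ h]. Qed.
Lemma md_ge0 x y : 0 <= d x y.
Proof. have := mdT x y x; rewrite md0 (mdC y x) => h; lra. Qed.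
Lemma md_gt0 x y : x <> y -> 0 < d x y.
Proof.
move=> xy; rewrite lt_neqAle md_ge0 andbT; apply/eqP => h.
by case: hd => H _; apply: xy; apply/(H x y); rewrite h.
Qed.
Lemma md_eq0 x y : d x y = 0 -> x = y.
Proof. by case: hd => H _ /(H x y). Qed.

Lemma lipschitz_pos f : lipschitz d f ->
  exists L, 0 <= L /\ forall x y, `|f x - f y| <= L * d x y.
Proof.
case=> L hL; exists `|L|; split => // x y.
apply: (le_trans (hL x y)); apply: ler_wpM2r; [exact: md_ge0|exact: ler_norm].
Qed.

Lemma lipnorm_le f M : 0 <= M ->
  (forall x y, x <> y -> `|f x - f y| <= M * d x y) -> lipnorm d f <= M.
Proof.
move=> M0 H; rewrite /lipnorm.
set S := [set r | _].
have [[r Sr]|nS] := pselect (S !=set0).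
  apply: ge_sup; first by exists r.
  move=> _ [a [b [ab ->]]]; rewrite ler_pdivrMr ?md_gt0 //; exact: H.
have -> : S = set0.
  by apply/seteqP; split => r Hr //; exfalso; apply: nS; exists r.
by rewrite sup0.
Qed.

Lemma lipnorm_lip f x y : lipschitz d f -> `|f x - f y| <= lipnorm d f * d x y.
Proof.
move=> /lipschitz_pos [L [L0 hL]].
have [->|xy] := pselect (x = y); first by rewrite subrr normr0 md0 mulr0.
rewrite -ler_pdivrMr ?md_gt0 //.
apply: (ub_le_sup (E := [set r | exists x y, x <> y /\ r = `|f x - f y| / d x y])).
  exists L => _ [a [b [ab ->]]]; rewrite ler_pdivrMr ?md_gt0 //.
by exists x, y.
Qed.

Lemma lipnorm_ge0 f : lipschitz d f -> 0 <= lipnorm d f.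
Proof.
move=> /lipschitz_pos [L [L0 hL]]; rewrite /lipnorm.
set S := [set r | _].
have [[r Sr]|nS] := pselect (S !=set0).
  have hub : has_ubound S.
    exists L => _ [a [b [ab ->]]]; rewrite ler_pdivrMr ?md_gt0 //.
  apply: (le_trans _ (ub_le_sup hub Sr)).
  by case: Sr => a [b [ab ->]]; rewrite divr_ge0 // md_ge0.
have -> : S = set0.
  by apply/seteqP; split => r Hr //; exfalso; apply: nS; exists r.
by rewrite sup0.
Qed.

End Metric.

Section Ultra.
Variables (I : Type) (U : set (set I)).
Hypothesis hU : is_ultrafilter U.

Lemma U_mono A B : U A -> A `<=` B -> U B.
Proof. by case: hU => _ [_ [h _]]; apply: h. Qed.
Lemma U_cap A B : U A -> U B -> U (A `&` B).
Proof. by case: hU => _ [_ [_ [h _]]]; apply: h. Qed.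
Lemma U_T : U setT.
Proof. by case: hU => _ [h _]. Qed.
Lemma U_ne A : U A -> exists i, A i.
Proof.
move=> UA; apply: contrapT => nA.
have h0 : ~ U set0 by case: hU.
apply: h0; apply: (@U_mono A set0 UA) => i Ai; by apply: nA; exists i.
Qed.
Lemma U_or A : U A \/ U (~` A).
Proof. by case: hU => _ [_ [_ [_ h]]]. Qed.

Lemma ulimP (a : I -> R) (L : R) : ulim U a L <->
  forall e, 0 < e -> U [set i | L - e < a i /\ a i < L + e].
Proof.
split=> h e e0; apply: U_mono (h e e0) _ => i /=.
  by rewrite ltr_distl => /andP.
by rewrite ltr_distl => -[-> ->].
Qed.

Lemma ulim_unique (a : I -> R) (L1 L2 : R) : ulim U a L1 -> ulim U a L2 -> L1 = L2.
Proof.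
move=> /ulimP h1 /ulimP h2.
have key : forall A B : R, (forall e, 0 < e -> U [set i | A - e < a i /\ a i < A + e]) ->
  (forall e, 0 < e -> U [set i | B - e < a i /\ a i < B + e]) -> ~ A < B.
  move=> A B hA hB AB.
  have e0 : 0 < (B - A) / 2 by apply: divr_gt0 => //; rewrite subr_gt0.
  have [i [[_ hi1] [hi2 _]]] := U_ne (U_cap (hA _ e0) (hB _ e0)).
  lra.
have [l12|l21|//] := ltgtP L1 L2; first by case: (key _ _ h1 h2 l12).
by case: (key _ _ h2 h1 l21).
Qed.

Lemma ulim_exists (a : I -> R) (M : R) : (forall i, `|a i| <= M) -> exists L, ulim U a L.
Proof.
move=> hM.
pose S := [set t | U [set i | t <= a i]].
have SM : S (- M).
  apply: U_mono U_T _ => i _; have := hM i; rewrite ler_norml => /andP[] //.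
have ubS : ubound S M.
  move=> t St; rewrite leNgt; apply/negP => Mt.
  have [i /= hi] := U_ne St; have := hM i; rewrite ler_norml => /andP[_ h]; lra.
have hs : has_sup S by split; [exists (- M) | exists M].
exists (sup S); apply/ulimP => e e0.
have e20 : 0 < e / 2 by apply: divr_gt0.
have [t St ht] := sup_adherent e20 hs.
have nS : ~ S (sup S + e / 2).
  move=> h; have := sup_upper_bound hs h; lra.
have U2 : U (~` [set i | sup S + e / 2 <= a i]).
  by case: (U_or [set i | sup S + e / 2 <= a i]).
apply: U_mono (U_cap St U2) _ => i /= [h1 h2]; split; first lra.
by move/negP: h2; rewrite -ltNge; lra.
Qed.

Lemma ulim_cst (v : R) : ulim U (fun _ => v) v.
Proof. by move=> e e0; apply: U_mono U_T _ => i _; rewrite subrr normr0. Qed.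

Lemma ulimD (a b : I -> R) (A B : R) : ulim U a A -> ulim U b B ->
  ulim U (fun i => a i + b i) (A + B).
Proof.
move=> /ulimP ha /ulimP hb; apply/ulimP => e e0.
have e20 : 0 < e / 2 by apply: divr_gt0.
apply: U_mono (U_cap (ha _ e20) (hb _ e20)) _ => i /= [[h1 h2] [h3 h4]]; lra.
Qed.

Lemma ulimN (a : I -> R) (A : R) : ulim U a A -> ulim U (fun i => - a i) (- A).
Proof. by move=> h e e0; apply: U_mono (h e e0) _ => i /=; rewrite -opprD normrN. Qed.

Lemma ulimB (a b : I -> R) (A B : R) : ulim U a A -> ulim U b B ->
  ulim U (fun i => a i - b i) (A - B).
Proof. by move=> ha hb; apply: ulimD ha (ulimN hb). Qed.

Lemma ulimM (a b : I -> R) (A B M : R) : (forall i, `|a i| <= M) -> ulim U a A -> ulim U b B ->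
  ulim U (fun i => a i * b i) (A * B).
Proof.
move=> hM ha hb e e0.
have [i0 _] := U_ne U_T.
have M0 : 0 <= M by apply: le_trans (hM i0).
pose nB := `|B|.
pose dl := e / (M + nB + 1).
have nB0 : 0 <= nB by exact: normr_ge0.
have dl0 : 0 < dl by apply: divr_gt0 => //; lra.
have hdl : dl * (M + nB + 1) = e by rewrite /dl divfK //; lra.
apply: U_mono (U_cap (ha _ dl0) (hb _ dl0)) _ => i /= [h1 h2].
have -> : a i * b i - A * B = a i * (b i - B) + B * (a i - A) by ring.
apply: le_lt_trans (ler_normD _ _) _.
rewrite !normrM.
have h3 : `|a i| * `|b i - B| <= M * dl.
  by apply: ler_pM => //; apply: ltW.
have h4 : `|B| * `|a i - A| <= nB * dl.
  by apply: ler_pM => //; apply: ltW.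
have : M * dl + nB * dl < e by rewrite -hdl; nra.
lra.
Qed.

Lemma ulim_le (a b : I -> R) (A B : R) : (forall i, a i <= b i) -> ulim U a A -> ulim U b B -> A <= B.
Proof.
move=> hab /ulimP ha /ulimP hb; rewrite leNgt; apply/negP => BA.
have e0 : 0 < (A - B) / 2 by apply: divr_gt0 => //; rewrite subr_gt0.
have [i [[h1 _] [_ h2]]] := U_ne (U_cap (ha _ e0) (hb _ e0)).
have := hab i; lra.
Qed.

End Ultra.
End Aux.

Section Lip.
Variable R : realType.
Variables (T : Type) (d : T -> T -> R).
Hypothesis hd : is_metric d.

Lemma lip_add (f g : T -> R) : lipschitz d f -> lipschitz d g ->
  lipschitz d (fun z => f z + g z).
Proof.
move=> /(lipschitz_pos hd) [L [L0 hL]] /(lipschitz_pos hd) [L' [L0' hL']].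
exists (L + L') => x y.
have -> : f x + g x - (f y + g y) = (f x - f y) + (g x - g y) by ring.
apply: le_trans (ler_normD _ _) _; rewrite mulrDl; exact: lerD.
Qed.

Lemma lip_scale (c : R) (f : T -> R) : lipschitz d f ->
  lipschitz d (fun z => c * f z).
Proof.
move=> [L hL]; exists (`|c| * L) => x y.
rewrite -mulrBr normrM -mulrA; apply: ler_wpM2l => //; exact: hL.
Qed.

Lemma lip_cst (v : R) : lipschitz d (fun _ => v).
Proof. by exists 0 => x y; rewrite subrr normr0 mul0r. Qed.

Lemma lip_dist q : lipschitz d (fun z => d z q).
Proof.
exists 1 => x y; rewrite mul1r ler_norml; apply/andP; split.
  have := mdT hd y x q; rewrite (mdC hd y x); lra.
have := mdT hd x y q; lra.
Qed.

Lemma dist_le1 x y q : `|d x q - d y q| <= d x y.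
Proof.
rewrite ler_norml; apply/andP; split.
  have := mdT hd y x q; rewrite (mdC hd y x); lra.
have := mdT hd x y q; lra.
Qed.

Lemma lip_bounded (f : T -> R) p D : (forall z, d z p <= D) -> lipschitz d f ->
  exists B, forall z, `|f z| <= B.
Proof.
move=> hD /(lipschitz_pos hd) [L [L0 hL]]; exists (`|f p| + L * D) => z.
have -> : f z = f p + (f z - f p) by ring.
apply: le_trans (ler_normD _ _) _; apply: lerD => //.
apply: le_trans (hL z p) _; exact: ler_wpM2l.
Qed.

Lemma lip_mul (f g : T -> R) Bf Bg : lipschitz d f -> lipschitz d g ->
  (forall z, `|f z| <= Bf) -> (forall z, `|g z| <= Bg) ->
  lipschitz d (fun z => f z * g z).
Proof.
move=> /(lipschitz_pos hd) [L [L0 hL]] /(lipschitz_pos hd) [L' [L0' hL']] hf hg.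
exists (Bf * L' + Bg * L) => x y.
have -> : f x * g x - f y * g y = f x * (g x - g y) + g y * (f x - f y) by ring.
apply: le_trans (ler_normD _ _) _; rewrite mulrDl !normrM -!mulrA.
apply: lerD; apply: ler_pM => //.
Qed.

Lemma mopen_pos (F : T -> R) : lipschitz d F -> mopen d [set z | 0 < F z].
Proof.
move=> /(lipschitz_pos hd) [L [L0 hL]] x /= Fx.
exists (F x / (L + 1)); split; first by apply: divr_gt0 => //; lra.
move=> y dxy.
have hr : F x / (L + 1) * (L + 1) = F x by rewrite divfK //; lra.
have h1 : L * d x y <= L * (F x / (L + 1)) by apply: ler_wpM2l => //; exact: ltW.
have := hL x y; rewrite ler_norml => /andP[_ h2].
rewrite /=; set r := F x / (L + 1) in hr h1 *.
have : L * r + r = F x by rewrite -hr; ring.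
have r0 : 0 < r by apply: divr_gt0 => //; lra.
lra.
Qed.

Lemma mopen_or (P Q : T -> Prop) : mopen d [set z | P z] -> mopen d [set z | Q z] ->
  mopen d [set z | P z \/ Q z].
Proof.
move=> hP hQ x /= [Px|Qx].
  by have [r [r0 hr]] := hP x Px; exists r; split => // y /hr; left.
by have [r [r0 hr]] := hQ x Qx; exists r; split => // y /hr; right.
Qed.

Lemma In_le_max (j : nat) s : List.In j s -> (j <= foldr maxn 0 s)%N.
Proof.
elim: s => //= a s IH [->|/IH h]; first exact: leq_maxl.
exact: leq_trans h (leq_maxr _ _).
Qed.

Lemma compact_nat (V : nat -> set T) : mcompact d ->
  (forall n, mopen d (V n)) -> (forall z, exists n, V n z) ->
  (forall n m, (n <= m)%N -> V n `<=` V m) -> exists N, forall z, V N z.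
Proof.
move=> hc ho hcov hm; have [s hs] := hc _ V ho hcov.
exists (foldr maxn 0 s) => z; have [j [js Vz]] := hs z.
exact: hm _ _ (In_le_max js) _ Vz.
Qed.

Lemma compact_bounded p : mcompact d -> exists D, forall z, d z p <= D.
Proof.
move=> hc.
pose V := fun n : nat => [set z | 0 < n%:R - d z p].
have h1 : forall n, mopen d (V n).
  move=> n; apply: mopen_pos; apply: lip_add; first exact: lip_cst.
  have -> : (fun z => - d z p) = (fun z => (-1) * d z p) by apply: funext => z; ring.
  exact/lip_scale/lip_dist.
have h2 : forall z, exists n, V n z.
  move=> z; exists (Num.Def.archi_bound (d z p)); rewrite /V /=.
  by rewrite subr_gt0; apply: archi_boundP; exact: md_ge0.
have h3 : forall n m, (n <= m)%N -> V n `<=` V m.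
  move=> n m nm z; rewrite /V /=; have : (n%:R <= m%:R :> R) by rewrite ler_nat.
  lra.
have [N hN] := compact_nat hc h1 h2 h3.
by exists N%:R => z; have := hN z; rewrite /V /=; lra.
Qed.

Lemma Lip0_bounded (f : T -> R) p D : (forall z, d z p <= D) -> Lip0 d p f ->
  forall z, `|f z| <= lipnorm d f * D.
Proof.
move=> hD [fp hf] z; have := lipnorm_lip hd z p hf; rewrite fp subr0 => h.
apply: le_trans h _; apply: ler_wpM2l; [exact: lipnorm_ge0|exact: hD].
Qed.

Lemma Lip0_add (f g : T -> R) p : Lip0 d p f -> Lip0 d p g -> Lip0 d p (fun z => f z + g z).
Proof. by move=> [f0 hf] [g0 hg]; split; [rewrite f0 g0 addr0|exact: lip_add]. Qed.

Lemma Lip0_scale (c : R) (f : T -> R) p : Lip0 d p f -> Lip0 d p (fun z => c * f z).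
Proof. by move=> [f0 hf]; split; [rewrite f0 mulr0|exact: lip_scale]. Qed.

Lemma Lip0_mul (f g : T -> R) p D : (forall z, d z p <= D) ->
  Lip0 d p f -> Lip0 d p g -> Lip0 d p (fun z => f z * g z).
Proof.
move=> hD hf hg; split; first by case: hf => -> _; rewrite mul0r.
apply: lip_mul (Lip0_bounded hD hf) (Lip0_bounded hD hg).
  by case: hf. by case: hg.
Qed.

Lemma Lip0_0 p : Lip0 d p (fun _ => 0).
Proof. by split => //; exact: lip_cst. Qed.

Lemma Lip0_dist p q : Lip0 d p (fun z => d z q - d p q).
Proof.
split; first by rewrite subrr.
apply: lip_add; first exact: lip_dist. exact: lip_cst.
Qed.

Lemma lipnorm_dist_le q : lipnorm d (fun z => d z q) <= 1.
Proof.
apply: lipnorm_le => // x y _; have [L hL] := lip_dist q.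
rewrite mul1r ler_norml; apply/andP; split.
  have := mdT hd y x q; rewrite (mdC hd y x); lra.
have := mdT hd x y q; lra.
Qed.

End Lip.

Section Real.
Variable R : realType.

Lemma div_le (X Y W : R) : 0 < Y -> `|X| <= W * Y -> `|X / Y| <= W.
Proof. by move=> Y0 h; rewrite normrM normfV (gtr0_norm Y0) ler_pdivrMr. Qed.

Lemma cube_le (S T M : R) : 0 <= S -> 0 <= T -> S <= M -> T <= M ->
  S ^+ 3 + S ^+ 2 * T + S * T ^+ 2 + T ^+ 3 <= 4%:R * M ^+ 3.
Proof.
move=> S0 T0 SM TM.
have M0 : 0 <= M by apply: le_trans SM.
have h1 : S ^+ 2 <= M ^+ 2 by rewrite ler_pXn2r // nnegrE.
have h2 : T ^+ 2 <= M ^+ 2 by rewrite ler_pXn2r // nnegrE.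
have h3 : S ^+ 3 <= M ^+ 3 by rewrite ler_pXn2r // nnegrE.
have h4 : T ^+ 3 <= M ^+ 3 by rewrite ler_pXn2r // nnegrE.
have h5 : S ^+ 2 * T <= M ^+ 2 * M by apply: ler_pM => //; exact: sqr_ge0.
have h6 : S * T ^+ 2 <= M * M ^+ 2 by apply: ler_pM => //; exact: sqr_ge0.
have e1 : M ^+ 2 * M = M ^+ 3 by rewrite -exprSr.
have e2 : M * M ^+ 2 = M ^+ 3 by rewrite -exprS.
lra.
Qed.

Lemma pow4_lip (L a b s t dd : R) : 0 <= L -> 0 <= b -> b <= a ->
  `|s| <= L * a -> `|t| <= L * b -> `|s - t| <= L * dd ->
  `|s ^+ 4 - t ^+ 4| <= 4%:R * L ^+ 4 * a ^+ 3 * dd.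
Proof.
move=> L0 b0 ba hs ht hst.
have -> : s ^+ 4 - t ^+ 4 = (s - t) * (s ^+ 3 + s ^+ 2 * t + s * t ^+ 2 + t ^+ 3) by ring.
rewrite normrM.
have hsum : `|s ^+ 3 + s ^+ 2 * t + s * t ^+ 2 + t ^+ 3| <= 4%:R * (L * a) ^+ 3.
  apply: le_trans (cube_le (normr_ge0 s) (normr_ge0 t) hs _); last first.
    by apply: le_trans ht _; apply: ler_wpM2l.
  apply: le_trans (ler_normD _ _) _; rewrite -!normrX -!normrM.
  rewrite lerD2r; apply: le_trans (ler_normD _ _) _; rewrite lerD2r.
  exact: ler_normD.
have -> : 4%:R * L ^+ 4 * a ^+ 3 * dd = (L * dd) * (4%:R * (L * a) ^+ 3) by ring.
rewrite mulrC [X in _ <= X]mulrC; apply: ler_pM => //.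
Qed.

Lemma quot_real (a b dd Gz Gz' nz nz' c A A' LG D : R) :
  0 < c -> 0 <= A -> 0 <= A' -> 0 <= LG -> 0 < b -> b <= a -> a <= D -> 0 <= dd ->
  c * a ^+ 2 <= Gz -> c * b ^+ 2 <= Gz' -> `|nz'| <= A * b ^+ 4 ->
  `|nz - nz'| <= A' * a ^+ 3 * dd -> `|Gz - Gz'| <= LG * dd ->
  `|nz / Gz - nz' / Gz'| <= (A' * D / c + A * LG / c ^+ 2) * dd.
Proof.
move=> c0 A0 A'0 LG0 b0 ba aD dd0 hG hG' hn' hnn hGG.
have a0 : 0 < a by apply: lt_le_trans ba.
have Gz0 : 0 < Gz by apply: lt_le_trans hG; apply: mulr_gt0 => //; exact: exprn_gt0.
have Gz'0 : 0 < Gz' by apply: lt_le_trans hG'; apply: mulr_gt0 => //; exact: exprn_gt0.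
have -> : nz / Gz - nz' / Gz' = (nz - nz') / Gz + (nz' * (Gz' - Gz)) / (Gz * Gz').
  by field; apply/andP; split; apply: lt0r_neq0.
apply: le_trans (ler_normD _ _) _; rewrite [leRHS]mulrDl; apply: lerD.
  apply: div_le => //; apply: le_trans hnn _.
  have -> : A' * D / c * dd * Gz = (A' * dd) * (D * (Gz / c)) by field; exact: lt0r_neq0.
  have -> : A' * a ^+ 3 * dd = (A' * dd) * (a * a ^+ 2) by ring.
  apply: ler_wpM2l; first exact: mulr_ge0.
  apply: ler_pM => //; [exact: ltW|exact: sqr_ge0|].
  by rewrite ler_pdivlMr // mulrC.
apply: div_le; first exact: mulr_gt0.
rewrite normrM distrC; apply: le_trans (ler_pM (normr_ge0 _) (normr_ge0 _) hn' hGG) _.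
have hb4 : c ^+ 2 * b ^+ 4 <= Gz * Gz'.
  have -> : c ^+ 2 * b ^+ 4 = (c * b ^+ 2) * (c * b ^+ 2) by ring.
  apply: ler_pM => //; [apply: mulr_ge0; [exact: ltW|exact: sqr_ge0]|apply: mulr_ge0; [exact: ltW|exact: sqr_ge0]|].
  apply: le_trans hG; apply: ler_wpM2l; first exact: ltW.
  by rewrite ler_pXn2r // nnegrE ltW.
have -> : A * b ^+ 4 * (LG * dd) = (A * LG / c ^+ 2 * dd) * (c ^+ 2 * b ^+ 4).
  by field; apply: lt0r_neq0.
apply: ler_wpM2l => //.
by apply: mulr_ge0 => //; apply: divr_ge0; [exact: mulr_ge0|exact: sqr_ge0].
Qed.

End Real.

Section Char.
Variable R : realType.
Variables (K : Type) (dK : K -> K -> R) (k0 : K).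
Hypotheses (hd : is_metric dK) (hc : mcompact dK).
Variable chi : (K -> R) -> R.
Hypothesis chA : forall f g, Lip0 dK k0 f -> Lip0 dK k0 g ->
  chi (fun z => f z + g z) = chi f + chi g.
Hypothesis chZ : forall (c : R) f, Lip0 dK k0 f -> chi (fun z => c * f z) = c * chi f.
Hypothesis chM : forall f g, Lip0 dK k0 f -> Lip0 dK k0 g ->
  chi (fun z => f z * g z) = chi f * chi g.

Lemma chi0 : chi (fun _ => 0) = 0.
Proof.
have e : (fun _ : K => 0 : R) = (fun z => 0 * (fun _ : K => 0 : R) z).
  by apply: funext => z; rewrite mul0r.
by rewrite e chZ ?mul0r //; exact: Lip0_0.
Qed.

Lemma lip_sub (f g : K -> R) : lipschitz dK f -> lipschitz dK g ->
  lipschitz dK (fun z => f z - g z).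
Proof.
move=> hf hg.
have -> : (fun z => f z - g z) = (fun z => f z + (-1) * g z).
  by apply: funext => z; ring.
by apply: lip_add => //; exact: lip_scale.
Qed.

Lemma lip_norm (f : K -> R) : lipschitz dK f -> lipschitz dK (fun z => `|f z|).
Proof.
move=> [L hL]; exists L => x y; apply: le_trans (hL x y).
exact: ler_dist_dist.
Qed.

Let u0 := fun z => dK z k0.

Fixpoint sumfun (t : (K -> R) -> K -> R) (s : seq (K -> R)) : K -> R :=
  match s with
  | [::] => fun _ => 0
  | j :: s' => fun z => t j z + sumfun t s' z
  end.

Lemma u0_ge0 z : 0 <= u0 z.
Proof. exact: md_ge0. Qed.

Lemma u0_lip : Lip0 dK k0 u0.
Proof. by split; [exact: md0|exact: lip_dist]. Qed.

Lemma quot_lip (n G : K -> R) (A A' c D : R) :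
  (forall z, dK z k0 <= D) ->
  0 < c -> 0 <= A -> 0 <= A' -> lipschitz dK G ->
  (forall z, `|n z| <= A * u0 z ^+ 4) ->
  (forall z z', u0 z' <= u0 z -> `|n z - n z'| <= A' * u0 z ^+ 3 * dK z z') ->
  (forall z, c * u0 z ^+ 2 <= G z) ->
  Lip0 dK k0 (fun z => n z / G z).
Proof.
move=> hD c0 A0 A'0 /(lipschitz_pos hd) [LG [LG0 hLG]] hn hn' hGc.
have D0 : 0 <= D by apply: le_trans (hD k0); rewrite md0.
have nk0 : n k0 = 0.
  by apply/normr0_eq0/eqP; rewrite eq_le normr_ge0 andbT; apply: le_trans (hn k0) _;
     rewrite /u0 md0 // expr0n mulr0.
split; first by rewrite nk0 mul0r.
pose Lq := A' * D / c + A * LG / c ^+ 2 + A * D / c.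
have Lq1 : 0 <= A' * D / c by apply: divr_ge0; [exact: mulr_ge0|exact: ltW].
have Lq2 : 0 <= A * LG / c ^+ 2 by apply: divr_ge0; [exact: mulr_ge0|exact: sqr_ge0].
have Lq3 : 0 <= A * D / c by apply: divr_ge0; [exact: mulr_ge0|exact: ltW].
have key : forall z z', u0 z' <= u0 z -> `|n z / G z - n z' / G z'| <= Lq * dK z z'.
  move=> z z' ba.
  have [b0|b0] := eqVneq (u0 z') 0.
    have zk : z' = k0 by apply: (md_eq0 hd).
    rewrite zk nk0 mul0r subr0.
    have [a0|a0] := eqVneq (u0 z) 0.
      have -> : z = k0 by apply: (md_eq0 hd).
      by rewrite nk0 mul0r normr0 md0 // mulr0.
    have a0' : 0 < u0 z by rewrite lt_neqAle eq_sym a0 u0_ge0.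
    have G0 : 0 < G z.
      by apply: lt_le_trans (hGc z); apply: mulr_gt0 => //; exact: exprn_gt0.
    have e : dK z k0 = u0 z by [].
    rewrite e; apply: div_le => //.
    apply: le_trans (hn z) _.
    have h1 : A * u0 z ^+ 4 <= A * D / c * u0 z * (c * u0 z ^+ 2).
      have -> : A * D / c * u0 z * (c * u0 z ^+ 2) = A * u0 z ^+ 3 * D.
        by field; exact: lt0r_neq0.
      have -> : A * u0 z ^+ 4 = A * u0 z ^+ 3 * u0 z by rewrite -mulrA -exprSr.
      apply: ler_wpM2l; [apply: mulr_ge0 => //; apply: exprn_ge0; exact: u0_ge0|exact: hD].
    apply: le_trans h1 _.
    have h2 : A * D / c * u0 z * (c * u0 z ^+ 2) <= A * D / c * u0 z * G z.
      apply: ler_wpM2l; last exact: hGc.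
      apply: mulr_ge0 => //; exact: u0_ge0.
    apply: le_trans h2 _; apply: ler_wpM2r; first exact: ltW.
    apply: ler_wpM2r; first exact: u0_ge0.
    rewrite /Lq; lra.
  have b0' : 0 < u0 z' by rewrite lt_neqAle eq_sym b0 u0_ge0.
  have := quot_real c0 A0 A'0 LG0 b0' ba (hD z) (md_ge0 hd z z') (hGc z) (hGc z')
    (hn z') (hn' z z' ba) (hLG z z').
  move=> h; apply: le_trans h _; apply: ler_wpM2r; first exact: md_ge0.
  rewrite /Lq; lra.
exists Lq => x y.
have [yx|xy] := lerP (u0 y) (u0 x); first exact: key.
by rewrite distrC (mdC hd); apply: key; exact: ltW.
Qed.

Lemma chi_eval : exists k, forall h, Lip0 dK k0 h -> chi h = h k.
Proof.
have [D hD] := compact_bounded hd k0 hc.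
have D0 : 0 <= D by apply: le_trans (hD k0); rewrite md0.
have Lu0 := u0_lip.
pose m := chi u0.
pose u2 := fun z => u0 z * u0 z.
have Lu2 : Lip0 dK k0 u2 by exact: (Lip0_mul hd hD Lu0 Lu0).
have cu2 : chi u2 = m * m by rewrite /u2 chM.
have u2E : forall z, u2 z = u0 z ^+ 2 by move=> z; rewrite /u2 expr2.
have u0k : forall z, u0 z = 0 -> z = k0 by move=> z; apply: (md_eq0 hd).
have [m0|m0] := eqVneq m 0.
  exists k0 => h Lh.
  have hk0 : h k0 = 0 by case: Lh.
  rewrite hk0.
  pose nh := lipnorm dK h.
  have Lh0 : 0 <= nh by apply: lipnorm_ge0 => //; case: Lh.
  have hb : forall z, `|h z| <= nh * u0 z.
    by move=> z; have := lipnorm_lip hd z k0 (proj2 Lh); rewrite hk0 subr0.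
  pose h2 := fun z => h z * h z.
  pose h4 := fun z => h2 z * h2 z.
  have Lh2 : Lip0 dK k0 h2 by exact: (Lip0_mul hd hD Lh Lh).
  have Lh4 : Lip0 dK k0 h4 by exact: (Lip0_mul hd hD Lh2 Lh2).
  have h4E : forall z, h4 z = h z ^+ 4 by move=> z; rewrite /h4 /h2; ring.
  have Lq : Lip0 dK k0 (fun z => h4 z / u2 z).
    apply: (@quot_lip h4 u2 (nh ^+ 4) (4%:R * nh ^+ 4) 1 D) => //.
    - exact: exprn_ge0.
    - by apply: mulr_ge0 => //; exact: exprn_ge0.
    - by case: Lu2.
    - move=> z; rewrite h4E normrX -exprMn; apply: lerXn2r => //; rewrite ?nnegrE //.
      by apply: mulr_ge0 => //; exact: u0_ge0.
    - move=> z z' ba; rewrite !h4E.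
      apply: pow4_lip; [exact: Lh0|exact: u0_ge0|exact: ba|exact: hb|exact: hb|].
      by apply: (lipnorm_lip hd) ; case: Lh.
    - by move=> z; rewrite mul1r u2E.
  have e : (fun z => u2 z * (h4 z / u2 z)) = h4.
    apply: funext => z; have [z0|z0] := eqVneq (u0 z) 0.
      by rewrite /u2 z0 !mul0r /h4 /h2 (u0k _ z0) hk0 !mul0r.
    by rewrite mulrC divfK // /u2 mulf_neq0.
  have : chi h ^+ 4 = 0.
    have -> : chi h ^+ 4 = chi h4 by rewrite /h4 /h2 !chM //; ring.
    by rewrite -e chM // cu2 m0 !mul0r.
  by move/eqP; rewrite expf_eq0 /= => /eqP.
apply: contrapT => Hno.
have Hno' : forall k, exists h, Lip0 dK k0 h /\ chi h != h k.
  move=> k; apply: contrapT => nh; apply: Hno; exists k => h Lh.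
  apply/eqP; apply: contrapT => ne; apply: nh; exists h; split => //; exact/negP.
pose u := fun z => m^-1 * u0 z.
have Lu : Lip0 dK k0 u by exact: (Lip0_scale m^-1 Lu0).
have cu : chi u = 1 by rewrite /u chZ // mulVf.
pose P := fun j : K -> R => if `[< Lip0 dK k0 j >] then j else (fun _ => 0).
have LP : forall j, Lip0 dK k0 (P j).
  move=> j; rewrite /P; case: asboolP => // _; exact: Lip0_0.
have PE : forall j, Lip0 dK k0 j -> P j = j by move=> j hj; rewrite /P; case: asboolP.
pose w := fun j z => P j z + (- chi (P j)) * u z.
have Lw : forall j, Lip0 dK k0 (w j).
  move=> j; exact: (Lip0_add hd (LP j) (Lip0_scale _ Lu)).
have cw : forall j, chi (w j) = 0.
  move=> j; rewrite /w (chA (LP j) (Lip0_scale (- chi (P j)) Lu)) chZ // cu; ring.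
pose term := fun j z => w j z * w j z.
have Lt : forall j, Lip0 dK k0 (term j).
  by move=> j; exact: (Lip0_mul hd hD (Lw j) (Lw j)).
have ct : forall j, chi (term j) = 0 by move=> j; rewrite /term chM // cw mul0r.
have tge0 : forall j z, 0 <= term j z by move=> j z; rewrite /term -expr2 sqr_ge0.
have LGs : forall s, Lip0 dK k0 (sumfun term s) /\ chi (sumfun term s) = 0.
  elim=> [|j s [IH1 IH2]] /=; first by split; [exact: Lip0_0|exact: chi0].
  split; first exact: (Lip0_add hd (Lt j) IH1).
  by rewrite (chA (Lt j) IH1) ct IH2 addr0.
have Gs0 : forall s z, 0 <= sumfun term s z.
  move=> s z; elim: s => [|j s IH] /=; [exact: lexx | exact: addr_ge0].
have Gsj : forall s j z, List.In j s -> term j z <= sumfun term s z.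
  move=> s j z; elim: s => [|j' s IH] //= [->|/IH h].
  - by rewrite lerDl.
  - by apply: le_trans h _; rewrite lerDr.
pose v := fun z => u z * u z + (-1) * u z.
have Lv : Lip0 dK k0 v.
  exact: (Lip0_add hd (Lip0_mul hd hD Lu Lu) (Lip0_scale (-1) Lu)).
have cv : chi v = 0.
  by rewrite /v (chA (Lip0_mul hd hD Lu Lu) (Lip0_scale (-1) Lu)) chM // chZ // cu; ring.
pose V := fun j : K -> R => [set z | Lip0 dK k0 j /\ 0 < `|j z - chi j| + `|u z - 1|].
have Vo : forall j, mopen dK (V j).
  move=> j x [Lj Fx].
  have hF : lipschitz dK (fun z => `|j z - chi j| + `|u z - 1|).
    apply: lip_add => //; apply: lip_norm; apply: lip_sub; try exact: lip_cst.
    by case: Lj. by case: Lu.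
  have [r [r0 hr]] := mopen_pos hd hF Fx.
  by exists r; split => // y /hr h; split.
have Vc : forall z, exists j, V j z.
  move=> z; have [u1|u1] := eqVneq (u z) 1.
    have [h [Lh hne]] := Hno' z.
    exists h; split => //; rewrite u1 subrr normr0 addr0 normr_gt0 subr_eq0 eq_sym //.
  exists (fun _ => 0); split; first exact: Lip0_0.
  have : 0 < `|u z - 1| by rewrite normr_gt0 subr_eq0.
  have := normr_ge0 (0 - chi (fun _ => 0)); lra.
have [s hs] := hc Vo Vc.
pose G := fun z => sumfun term s z + v z * v z.
have LG : Lip0 dK k0 G.
  exact: (Lip0_add hd (proj1 (LGs s)) (Lip0_mul hd hD Lv Lv)).
have cG : chi G = 0.
  by rewrite /G (chA (proj1 (LGs s)) (Lip0_mul hd hD Lv Lv)) (proj2 (LGs s)) chM // cv mul0r addr0.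
have vv0 : forall z, 0 <= v z * v z by move=> z; rewrite -expr2 sqr_ge0.
have G0 : forall z, 0 <= G z by move=> z; apply: addr_ge0.
have vG : forall z, v z * v z <= G z by move=> z; rewrite /G lerDr.
have uE : forall z, u0 z = m * u z by move=> z; rewrite /u mulrA mulfV // mul1r.
have sq_pos : forall x : R, x != 0 -> 0 < x * x.
  by move=> x x0; rewrite -expr2 exprn_even_gt0 //=.
have Gpos : forall z, z <> k0 -> 0 < G z.
  move=> z zk; have [j [js [Lj Fz]]] := hs z.
  have u0z : u0 z != 0 by apply/eqP => /u0k.
  have uz : u z != 0 by rewrite /u mulf_neq0 // invr_eq0.
  have [u1|u1] := eqVneq (u z) 1.
  - have hj : j z - chi j != 0.
      apply/eqP => e0; move: Fz; rewrite e0 u1 subrr normr0 addr0; lra.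
    have : 0 < term j z by rewrite /term /w PE // u1 mulr1 sq_pos.
    move=> h; apply: lt_le_trans h _; apply: le_trans (Gsj s j z js) _.
    by rewrite /G lerDl.
  - have : 0 < v z * v z.
      apply: sq_pos; have -> : v z = u z * (u z - 1) by rewrite /v; ring.
      by rewrite mulf_neq0 // subr_eq0.
    move=> h; exact: lt_le_trans h (vG z).
have mpos : 0 < `|m| by rewrite normr_gt0.
pose Vn := fun n : nat => [set z | 0 < `|m| / 2 - u0 z \/ 0 < n%:R * G z - u2 z].
have Vno : forall n, mopen dK (Vn n).
  move=> n; apply: (@mopen_or _ _ _ (fun z => 0 < `|m| / 2 - u0 z)
                      (fun z => 0 < n%:R * G z - u2 z)).
    apply: mopen_pos => //; apply: lip_sub; [exact: lip_cst|by case: Lu0].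
  apply: mopen_pos => //; apply: lip_sub; [apply: lip_scale; by case: LG|by case: Lu2].
have Vnc : forall z, exists n, Vn n z.
  move=> z; have [lt1|ge1] := ltrP (u0 z) (`|m| / 2).
    by exists 0%N; left; rewrite subr_gt0.
  have zk : z <> k0.
    move=> zk; move: ge1; rewrite zk /u0 md0 //; lra.
  have Gz := Gpos z zk.
  exists (Num.Def.archi_bound (u2 z / G z)); right.
  rewrite subr_gt0 -ltr_pdivrMr //.
  apply: archi_boundP; apply: divr_ge0; last exact: ltW.
  by rewrite u2E sqr_ge0.
have Vnm : forall n n', (n <= n')%N -> Vn n `<=` Vn n'.
  move=> n n' nn z [h|h]; [by left| right].
  have : n%:R * G z <= n'%:R * G z by apply: ler_wpM2r => //; rewrite ler_nat.
  lra.
have [N hN] := compact_nat hc Vno Vnc Vnm.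
have m2 : 0 < m ^+ 2 by rewrite exprn_even_gt0.
have N0 : 0 <= N%:R :> R by [].
pose c0 := (4%:R * m ^+ 2 + N%:R)^-1.
have c00 : 0 < c0 by rewrite /c0 invr_gt0; lra.
have hGc : forall z, c0 * u0 z ^+ 2 <= G z.
  move=> z; rewrite /c0 mulrC ler_pdivrMr; last lra.
  have GN : 0 <= N%:R * G z by apply: mulr_ge0.
  have Gm : 0 <= 4%:R * m ^+ 2 * G z by apply: mulr_ge0 => //; lra.
  case: (hN z) => h.
  - have hx : `|u z| < 1 / 2.
      rewrite /u normrM normfV (ger0_norm (u0_ge0 z)) mulrC ltr_pdivrMr //.
      lra.
    have hx' : u z < 1 / 2 by apply: le_lt_trans (ler_norm _) hx.
    have h1 : 1 <= 4%:R * (u z - 1) ^+ 2 by nra.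
    have h2 : 0 <= m ^+ 2 * u z ^+ 2 by apply: mulr_ge0; [exact: ltW|exact: sqr_ge0].
    have h3 : m ^+ 2 * u z ^+ 2 <= m ^+ 2 * u z ^+ 2 * (4%:R * (u z - 1) ^+ 2).
      exact: ler_peMr.
    have e1 : u0 z ^+ 2 = m ^+ 2 * u z ^+ 2 by rewrite uE exprMn.
    have e2 : m ^+ 2 * u z ^+ 2 * (4%:R * (u z - 1) ^+ 2) = 4%:R * m ^+ 2 * (v z * v z).
      by rewrite /v; ring.
    have h4 : 4%:R * m ^+ 2 * (v z * v z) <= 4%:R * m ^+ 2 * G z.
      by apply: ler_wpM2l; [lra|exact: vG].
    rewrite e1; apply: le_trans h3 _; rewrite e2; apply: le_trans h4 _.
    have -> : G z * (4%:R * m ^+ 2 + N%:R) = 4%:R * m ^+ 2 * G z + N%:R * G z by ring.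
    lra.
  - rewrite -u2E.
    have -> : G z * (4%:R * m ^+ 2 + N%:R) = 4%:R * m ^+ 2 * G z + N%:R * G z by ring.
    lra.
pose u4 := fun z => u2 z * u2 z.
have Lu4 : Lip0 dK k0 u4 by exact: (Lip0_mul hd hD Lu2 Lu2).
have u4E : forall z, u4 z = u0 z ^+ 4 by move=> z; rewrite /u4 /u2; ring.
have Lq : Lip0 dK k0 (fun z => u4 z / G z).
  apply: (@quot_lip u4 G 1 4%:R c0 D) => //.
  - by case: LG.
  - by move=> z; rewrite u4E mul1r ger0_norm //; apply: exprn_ge0; exact: u0_ge0.
  - move=> z z' ba; rewrite !u4E.
    have := @pow4_lip _ 1 (u0 z) (u0 z') (u0 z) (u0 z') (dK z z').
    rewrite expr1n mulr1 !mul1r; apply => //.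
    + exact: u0_ge0.
    + by rewrite ger0_norm // u0_ge0.
    + by rewrite ger0_norm // u0_ge0.
    + exact: (dist_le1 hd).
have e : (fun z => G z * (u4 z / G z)) = u4.
  apply: funext => z; have [G00|G00] := eqVneq (G z) 0.
    have : c0 * u0 z ^+ 2 <= 0 by rewrite -G00; exact: hGc.
    rewrite pmulr_rle0 // => hu.
    have hu0 : u2 z = 0 by rewrite u2E; apply: le_anti; rewrite hu sqr_ge0.
    by rewrite G00 mul0r /u4 hu0 mul0r.
  by rewrite mulrC divfK.
have : chi u4 = 0 by rewrite -e chM // cG mul0r.
rewrite /u4 chM // cu2 => /eqP; rewrite !mulf_eq0 !orbb => /eqP.
by move/eqP: m0.
Qed.

End Char.

Section UPsec.
Variable R : realType.
Variables (I : Type) (M : I -> Type) (d : forall i, M i -> M i -> R) (p : forall i, M i).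
Arguments d : clear implicits.
Hypothesis hd : forall i : I, is_metric (d i).
Variable B0 : R.
Hypothesis hB0 : forall (i : I) (x y : M i), d i x y <= B0.
Hypothesis B00 : 0 <= B0.

Local Notation UP := (in_Lip_ultraproduct d p).

Lemma UP_norm_bound f : UP f -> exists Bf, 0 <= Bf /\ forall i, `|lipnorm (d i) (f i)| <= Bf.
Proof.
move=> [hf [Bf hBf]]; exists `|Bf|; split => // i.
rewrite ger0_norm; last by apply: lipnorm_ge0 => //; case: (hf i).
exact: le_trans (hBf i) (ler_norm _).
Qed.

Lemma UP_eval_bound f : UP f -> exists Mb, forall i (z : M i), `|f i z| <= Mb.
Proof.
move=> hf; have [Bf [Bf0 hBf]] := UP_norm_bound hf; exists (Bf * B0) => i z.
apply: le_trans (Lip0_bounded (hd i) (fun z => hB0 z (p i)) (proj1 hf i) z) _.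
apply: ler_wpM2r => //; exact: le_trans (ler_norm _) (hBf i).
Qed.

Lemma UP_add f g : UP f -> UP g -> UP (fun i z => f i z + g i z).
Proof.
move=> hf hg; have [Bf [Bf0 hBf]] := UP_norm_bound hf.
have [Bg [Bg0 hBg]] := UP_norm_bound hg.
split; first by move=> i; apply: Lip0_add => //; [exact: proj1 hf i|exact: proj1 hg i].
exists (Bf + Bg) => i; apply: lipnorm_le => //; first exact: addr_ge0.
move=> x y _.
have -> : f i x + g i x - (f i y + g i y) = (f i x - f i y) + (g i x - g i y) by ring.
apply: le_trans (ler_normD _ _) _; rewrite mulrDl; apply: lerD.
  apply: le_trans (lipnorm_lip (hd i) x y (proj2 (proj1 hf i))) _.
  by apply: ler_wpM2r; [exact: md_ge0|exact: le_trans (ler_norm _) (hBf i)].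
apply: le_trans (lipnorm_lip (hd i) x y (proj2 (proj1 hg i))) _.
by apply: ler_wpM2r; [exact: md_ge0|exact: le_trans (ler_norm _) (hBg i)].
Qed.

Lemma UP_scale (a : R) f : UP f -> UP (fun i z => a * f i z).
Proof.
move=> hf; have [Bf [Bf0 hBf]] := UP_norm_bound hf.
split; first by move=> i; apply: Lip0_scale; exact: proj1 hf i.
exists (`|a| * Bf) => i; apply: lipnorm_le => //; first exact: mulr_ge0.
move=> x y _; rewrite -mulrBr normrM -mulrA; apply: ler_wpM2l => //.
apply: le_trans (lipnorm_lip (hd i) x y (proj2 (proj1 hf i))) _.
by apply: ler_wpM2r; [exact: md_ge0|exact: le_trans (ler_norm _) (hBf i)].
Qed.

Lemma UP_mul f g : UP f -> UP g -> UP (fun i z => f i z * g i z).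
Proof.
move=> hf hg; have [Bf [Bf0 hBf]] := UP_norm_bound hf.
have [Bg [Bg0 hBg]] := UP_norm_bound hg.
split.
  move=> i; apply: (Lip0_mul (hd i) (fun z => hB0 z (p i))); [exact: proj1 hf i|exact: proj1 hg i].
exists (Bf * B0 * Bg + Bg * B0 * Bf) => i; apply: lipnorm_le => //.
  by apply: addr_ge0; apply: mulr_ge0 => //; apply: mulr_ge0.
move=> x y _.
have -> : f i x * g i x - f i y * g i y = f i x * (g i x - g i y) + g i y * (f i x - f i y) by ring.
have nf : `|lipnorm (d i) (f i)| <= Bf := hBf i.
have ng : `|lipnorm (d i) (g i)| <= Bg := hBg i.
have nf0 : 0 <= lipnorm (d i) (f i) by apply: lipnorm_ge0 => //; case: (proj1 hf i).
have ng0 : 0 <= lipnorm (d i) (g i) by apply: lipnorm_ge0 => //; case: (proj1 hg i).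
rewrite ger0_norm // in nf; rewrite ger0_norm // in ng.
have bf := Lip0_bounded (hd i) (fun z => hB0 z (p i)) (proj1 hf i).
have bg := Lip0_bounded (hd i) (fun z => hB0 z (p i)) (proj1 hg i).
have lf := lipnorm_lip (hd i) x y (proj2 (proj1 hf i)).
have lg := lipnorm_lip (hd i) x y (proj2 (proj1 hg i)).
have dxy := md_ge0 (hd i) x y.
apply: le_trans (ler_normD _ _) _; rewrite !normrM mulrDl; apply: lerD.
  have -> : Bf * B0 * Bg * d i x y = (Bf * B0) * (Bg * d i x y) by ring.
  apply: ler_pM => //.
    apply: le_trans (bf x) _; apply: ler_wpM2r => //.
  apply: le_trans lg _; exact: ler_wpM2r.
have -> : Bg * B0 * Bf * d i x y = (Bg * B0) * (Bf * d i x y) by ring.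
apply: ler_pM => //.
  apply: le_trans (bg y) _; apply: ler_wpM2r => //.
apply: le_trans lf _; exact: ler_wpM2r.
Qed.

Lemma UP_dist (y : forall i, M i) : UP (fun i z => d i z (y i) - d i (p i) (y i)).
Proof.
split; first by move=> i; exact: Lip0_dist.
exists 1 => i; apply: lipnorm_le => // a b _.
have -> : d i a (y i) - d i (p i) (y i) - (d i b (y i) - d i (p i) (y i)) =
  d i a (y i) - d i b (y i) by ring.
by rewrite mul1r; exact: dist_le1.
Qed.

End UPsec.

Theorem proposition6p4 (R : realType)
    (K : Type) (dK : K -> K -> R) (k0 : K)
    (I : Type) (U : set (set I))
    (M : I -> Type) (d : forall i, M i -> M i -> R) (p : forall i, M i) :
  is_metric dK -> mcompact dK ->
  is_ultrafilter U ->
  (forall i, is_metric (d i)) ->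
  (exists B : R, forall i (x y : M i), d i x y <= B) ->
  (exists T : (forall i, M i -> R) -> (K -> R),
      lip_ultraproduct_algebra_iso U d p dK k0 T) ->
  exists (phi : (forall i, M i) -> K) (a b : R), 0 < a /\ 0 < b /\
    forall (x y : forall i, M i) (L : R),
      ulim U (fun i => d i (x i) (y i)) L ->
      a * L <= dK (phi x) (phi y) /\ dK (phi x) (phi y) <= b * L.
Proof.
move=> hdK hc hU hd [B0 hB0] [T HT].
move: HT; rewrite /lip_ultraproduct_algebra_iso /=.
move=> [HL [Hadd [Hsc [Hmul [Hsurj [c [C [c0 [C0 Hnorm]]]]]]]]].
have [i0 _] := U_ne hU (U_T hU).
have B00 : 0 <= B0 by apply: le_trans (hB0 i0 (p i0) (p i0)); rewrite md0.
pose UP := in_Lip_ultraproduct d p.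
have hnorm : forall f, UP f -> exists N, ulim U (fun i => lipnorm (d i) (f i)) N /\
    0 <= N /\ c * N <= lipnorm dK (T f) /\ lipnorm dK (T f) <= C * N.
  move=> f hf; have [Bf [Bf0 hBf]] := UP_norm_bound hd hf.
  have [N hN] := ulim_exists hU hBf.
  exists N; split => //; split; last exact: Hnorm.
  apply: (ulim_le hU _ (ulim_cst hU 0) hN) => i.
  by apply: lipnorm_ge0 => //; case: (proj1 hf i).
have lip0 : lipnorm dK (fun _ => 0) = 0.
  apply: le_anti; rewrite lipnorm_ge0 //; last exact: lip_cst.
  by rewrite andbT; apply: lipnorm_le => // x y _; rewrite subrr normr0 mul0r.
have null : forall f g, UP f -> UP g -> T f = T g ->
    forall x : forall i, M i, ulim U (fun i => f i (x i) - g i (x i)) 0.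
  move=> f g hf hg Tfg x.
  pose h := fun i z => f i z + (-1) * g i z.
  have hh : UP h by exact: (UP_add hd hf (UP_scale hd (-1) hg)).
  have Th : T h = (fun _ => 0).
    rewrite /h (Hadd _ _ hf (UP_scale hd (-1) hg)) (Hsc _ _ hg) Tfg.
    apply: funext => k; ring.
  have [N [hN [N0 [cN _]]]] := hnorm h hh.
  rewrite Th lip0 in cN.
  have N00 : N = 0 by apply: le_anti; rewrite N0 andbT -(pmulr_rle0 _ c0).
  move=> e e0.
  pose dl := e / (B0 + 1).
  have dl0 : 0 < dl by apply: divr_gt0 => //; lra.
  have hdl : dl * (B0 + 1) = e by rewrite /dl divfK //; lra.
  have hN' := hN dl dl0.
  refine (U_mono hU hN' _) => i /= hi.
  rewrite N00 subr0 in hi.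
  have nh0 : 0 <= lipnorm (d i) (h i) by apply: lipnorm_ge0 => //; case: (proj1 hh i).
  rewrite ger0_norm // in hi.
  have := Lip0_bounded (hd i) (fun z => hB0 i z (p i)) (proj1 hh i) (x i).
  rewrite /h mulN1r subr0 => hb.
  apply: le_lt_trans hb _.
  have : lipnorm (d i) (h i) * B0 <= dl * B0 by apply: ler_wpM2r => //; exact: ltW.
  have : dl * B0 < e by rewrite -hdl; lra.
  rewrite /h; lra.
have Hchi : forall (x : forall i, M i) (h : K -> R), exists v : R,
    forall f, UP f -> T f = h -> ulim U (fun i => f i (x i)) v.
  move=> x h.
  have [[f0 [hf0 Tf0]]|nf] := pselect (exists f0, UP f0 /\ T f0 = h); last first.
    by exists 0 => f hf Tf; exfalso; apply: nf; exists f.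
  have [Mb hMb] := UP_eval_bound hd hB0 B00 hf0.
  have [v hv] := ulim_exists hU (fun i => hMb i (x i)).
  exists v => f hf Tf.
  have := ulimD hU (null f f0 hf hf0 (etrans Tf (esym Tf0)) x) hv.
  rewrite add0r; have -> // : (fun i => f i (x i) - f0 i (x i) + f0 i (x i)) = (fun i => f i (x i)).
  by apply: funext => i; ring.
pose chi := fun x h => projT1 (cid (Hchi x h)).
have chiP : forall x f, UP f -> ulim U (fun i => f i (x i)) (chi x (T f)).
  by move=> x f hf; exact: (projT2 (cid (Hchi x (T f))) f hf erefl).
have Hphi : forall x : forall i, M i, exists k, forall h, Lip0 dK k0 h -> chi x h = h k.
  move=> x; apply: (chi_eval hdK hc).
  - move=> h1 h2 L1 L2.
    have [f1 [hf1 <-]] := Hsurj h1 L1; have [f2 [hf2 <-]] := Hsurj h2 L2.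
    rewrite -Hadd //.
    apply: (ulim_unique hU (chiP x _ (UP_add hd hf1 hf2))).
    exact (ulimD hU (chiP x f1 hf1) (chiP x f2 hf2)).
  - move=> a h1 L1.
    have [f1 [hf1 <-]] := Hsurj h1 L1.
    rewrite -Hsc //.
    apply: (ulim_unique hU (chiP x _ (UP_scale hd a hf1))).
    exact (ulimM hU (a := fun _ => a) (fun _ : I => lexx `|a|) (ulim_cst hU a) (chiP x f1 hf1)).
  - move=> h1 h2 L1 L2.
    have [f1 [hf1 <-]] := Hsurj h1 L1; have [f2 [hf2 <-]] := Hsurj h2 L2.
    rewrite -Hmul //.
    apply: (ulim_unique hU (chiP x _ (UP_mul hd hB0 B00 hf1 hf2))).
    have [Mb hMb] := UP_eval_bound hd hB0 B00 hf1.
    exact (ulimM hU (fun i => hMb i (x i)) (chiP x f1 hf1) (chiP x f2 hf2)).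
pose phi := fun x => projT1 (cid (Hphi x)).
have phiP : forall x h, Lip0 dK k0 h -> chi x h = h (phi x).
  by move=> x h; exact: (projT2 (cid (Hphi x)) h).
exists phi, C^-1, c^-1; split; first by rewrite invr_gt0.
split; first by rewrite invr_gt0.
move=> x y L HLxy.
have L0 : 0 <= L.
  apply: (ulim_le hU _ (ulim_cst hU 0) HLxy) => i; exact: md_ge0.
split.
- pose g := fun i z => d i z (y i) - d i (p i) (y i).
  have hg : UP g := UP_dist p hd y.
  have [N [hN [N0 [_ CN]]]] := hnorm g hg.
  have N1 : N <= 1.
    apply: (ulim_le hU _ hN (ulim_cst hU 1)) => i.
    apply: lipnorm_le => // a b _.
    have -> : g i a - g i b = d i a (y i) - d i b (y i) by rewrite /g; ring.
    by rewrite mul1r; exact: dist_le1.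
  have hx := chiP x g hg; have hy := chiP y g hg.
  rewrite phiP in hx; last exact: HL. rewrite phiP in hy; last exact: HL.
  have := ulimB hU hx hy.
  have -> : (fun i => g i (x i) - g i (y i)) = (fun i => d i (x i) (y i)).
    by apply: funext => i; rewrite /g md0 //; ring.
  move=> /(ulim_unique hU HLxy) ->.
  have hl := lipnorm_lip hdK (phi x) (phi y) (proj2 (HL g hg)).
  rewrite mulrC ler_pdivrMr //.
  apply: le_trans (ler_norm _) _; apply: le_trans hl _.
  rewrite [leRHS]mulrC; apply: ler_wpM2r; first exact: md_ge0.
  apply: le_trans CN _; rewrite -[leRHS]mulr1; apply: ler_wpM2l => //; exact: ltW.
- pose h := fun z => dK z (phi y) - dK k0 (phi y).
  have Lh : Lip0 dK k0 h by exact: Lip0_dist.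
  have [f [hf Tf]] := Hsurj h Lh.
  have [N [hN [N0 [cN _]]]] := hnorm f hf.
  have nh : lipnorm dK h <= 1.
    apply: lipnorm_le => // a b _.
    have -> : h a - h b = dK a (phi y) - dK b (phi y) by rewrite /h; ring.
    by rewrite mul1r; exact: dist_le1.
  rewrite Tf in cN.
  have Nc : N <= c^-1 by rewrite -(ler_pM2l c0) mulfV ?gt_eqF //; lra.
  have hx := chiP x f hf; have hy := chiP y f hf.
  rewrite Tf phiP // in hx; rewrite Tf phiP // in hy.
  have hxy := ulimB hU hx hy.
  have [Bf [Bf0 hBf]] := UP_norm_bound hd hf.
  have hNL := ulimM hU hBf hN HLxy.
  have := ulim_le hU _ hxy hNL.
  have e : h (phi x) - h (phi y) = dK (phi x) (phi y) by rewrite /h md0 //; ring.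
  rewrite e => H.
  have := H (fun i => le_trans (ler_norm _)
    (lipnorm_lip (hd i) (x i) (y i) (proj2 (proj1 hf i)))).
  move=> H2; apply: le_trans H2 _; exact: ler_wpM2r.
Qed.
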